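(* Let $P\ll Q$ be probability measures on $(\mathcal X,\mathcal F)$, let $\gamma>1$, and let $f:(0,\infty)\to\mathbb R$ be convex with $f(1)=0$, differentiable at $1$ and $\gamma$, with $f'(\gamma)>f'(1)$. Then for every $E\in\mathcal F$, $$P(E)\le\gamma\,Q(E)+\frac{D_f(P\Vert Q)}{f'(\gamma)-f'(1)}.$$
   Context: For convex $f$ on $(0,\infty)$ extended by $f(0):=\lim_{t\downarrow0}f(t)$ and $P\ll Q$, $D_f(P\Vert Q):=\int f(\mathrm dP/\mathrm dQ)\,\mathrm dQ$. *)

(* Defs.v *)
From HB Require Import structures.
From mathcomp Require Import all_boot all_order all_algebra.
From mathcomp Require Import all_classical all_reals all_analysis.
Set Implicit Arguments. Unset Strict Implicit. Unset Printing Implicit Defensive.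
Import Order.TTheory GRing.Theory Num.Theory.
Import numFieldNormedType.Exports.
Local Open Scope classical_set_scope.
Local Open Scope ring_scope.
Local Open Scope charge_scope.

Definition f_at0 (R : realType) (f : R -> R) : \bar R :=
  lim ((f t)%:E @[t --> 0^'+]).

Definition f_ext (R : realType) (f : R -> R) (t : \bar R) : \bar R :=
  if (0 < t)%E then (f (fine t))%:E else f_at0 f.

Definition f_divergence d (T : measurableType d) (R : realType)
  (f : R -> R) (P Q : probability T R) : \bar R :=
  (\int[Q]_x f_ext f (('d (charge_of_finite_measure P) '/d Q) x))%E.

(* Main.v *)
Require Import Defs.
From HB Require Import structures.
From mathcomp Require Import all_boot all_order all_algebra.
From mathcomp Require Import all_classical all_reals all_analysis.
From mathcomp Require Import ring lra measurable_realfun.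
Import Order.TTheory GRing.Theory Num.Theory.
Import numFieldNormedType.Exports.
Local Open Scope classical_set_scope.
Local Open Scope ring_scope.

Section S.
Context {R : realType}.

Lemma conv_ineq (f : R -> R)
  (cf : convex_function (`]0, +oo[%classic : set R) f) x y h :
  0 < x -> 0 < y -> 0 <= h -> h <= 1 ->
  f (h * x + (1 - h) * y) <= h * f x + (1 - h) * f y.
Proof.
move=> x0 y0 h0 h1.
have := cf (Itv01 h0 h1) x y.
rewrite !inE /= !in_itv /= !andbT => /(_ x0 y0).
by rewrite !convRE.
Qed.

Lemma supp_line (f : R -> R)
  (cf : convex_function (`]0, +oo[%classic : set R) f) x0 t :
  0 < x0 -> 0 < t -> derivable f x0 1 ->
  f x0 + derive1 f x0 * (t - x0) <= f t.
Proof.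
move=> x00 t0 d1.
set v := t - x0.
have df : differentiable f x0 by apply/derivable1_diffP.
have dv : derivable f x0 v := diff_derivable df.
have Dv : 'D_v f x0 = v * derive1 f x0 by rewrite deriveE // diff1E.
suff : 'D_v f x0 <= f t - f x0 by rewrite Dv mulrC lerBrDl addrC.
rewrite /derive cvg_at_rightE //.
apply: limr_le.
  apply/cvg_ex; eexists; apply: cvg_dnbhs_at_right; exact: dv.
near=> h.
have h0 : 0 < h by near: h; exact: nbhs_right_gt.
have h1 : h < 1 by near: h; exact: nbhs_right_lt.
rewrite /= /shift.
have -> : h *: v + x0 = h * t + (1 - h) * x0 by rewrite /v; rewrite /GRing.scale /=; lra.
have := @conv_ineq f cf t x0 h t0 x00 (ltW h0) (ltW h1).
move=> H.
rewrite -[X in _ <= X](mulKf (lt0r_neq0 h0)) /GRing.scale /=.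
rewrite ler_pM2l ?invr_gt0 //.
lra.
Unshelve. all: by end_near. Qed.
End S.

Section S2.
Context {R : realType}.

Lemma f_at0_ge (f : R -> R)
  (cf : convex_function (`]0, +oo[%classic : set R) f) :
  f 1 = 0 -> derivable f 1 1 -> ((- derive1 f 1)%:E <= f_at0 f)%E.
Proof.
move=> f1 d1.
set a := derive1 f 1.
have sA t : 0 < t -> a * (t - 1) <= f t.
  by move=> t0; have := @supp_line R f cf 1 t ltr01 t0 d1; rewrite f1 add0r.
pose phi := fun t => f t - a * (t - 1).
have phi_ge0 t : 0 < t -> 0 <= phi t by move=> /sA; rewrite /phi subr_ge0.
have phi_ni : {in Interval (BRight 0) (BLeft 1) &,
    nonincreasing_fun (fun t => (phi t)%:E)}.
  move=> s u; rewrite !in_itv/= => /andP[s0 s1] /andP[u0 u1] su; rewrite lee_fin.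
  have [->//|su'] := eqVneq s u.
  have {su su'}su : s < u by rewrite lt_neqAle su' su.
  pose lam := (1 - u) / (1 - s).
  have s1' : 0 < 1 - s by rewrite subr_gt0.
  have lam0 : 0 <= lam by rewrite /lam divr_ge0 // subr_ge0 ltW.
  have lam1 : lam <= 1 by rewrite /lam ler_pdivrMr // mul1r; lra.
  have ueq : u = lam * s + (1 - lam) * 1.
    rewrite /lam; field; lra.
  have H := @conv_ineq R f cf s 1 lam s0 ltr01 lam0 lam1.
  rewrite -ueq f1 mulr0 addr0 in H.
  have Heq : u - 1 = lam * (s - 1) by rewrite ueq; ring.
  have ps := phi_ge0 s s0.
  rewrite /phi Heq.
  rewrite /phi in ps.
  nra.
have cphi := @nonincreasing_at_right_cvge R (fun t => (phi t)%:E) 0 (BLeft 1)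
  ltr01 phi_ni.
set l := ereal_sup _ in cphi.
have l0 : (0 <= l)%E.
  apply: (cvge_to_ge cphi); near=> t; rewrite lee_fin; apply: phi_ge0.
  by near: t; exact: nbhs_right_gt.
have clin : (a * (t - 1))%:E @[t --> 0^'+] --> (- a)%:E.
  apply: cvg_EFin; first by near=> t.
  apply: cvg_at_right_filter.
  have -> : - a = a * (0 - 1) by ring.
  apply: cvgM; first exact: cvg_cst.
  apply: cvgB; [exact: cvg_id | exact: cvg_cst].
have def : (l +? (- a)%:E)%E by apply: fin_num_adde_defl.
have cf0 := cvgeD def cphi clin.
have -> : f_at0 f = (l + (- a)%:E)%E.
  rewrite /f_at0; apply: cvg_lim => //.
  apply: cvg_trans; last exact: cf0.
  apply: near_eq_cvg; near=> t.
  by rewrite /phi /= -EFinD subrK.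
by rewrite leeDr.
Unshelve. all: by end_near. Qed.
End S2.

Section S3.
Local Open Scope ereal_scope.
Context d (T : measurableType d) (R : realType) (mu : {measure set T -> \bar R}).

Lemma ge0_le_integral_nm (f1 f2 : T -> \bar R) :
  (forall x, 0 <= f1 x) -> (forall x, f1 x <= f2 x) ->
  \int[mu]_x f1 x <= \int[mu]_x f2 x.
Proof.
move=> f0 f12.
rewrite !ge0_integralTE //; last by move=> x; apply: le_trans (f0 x) (f12 x).
apply: ereal_sup_le => _ [h hf <-]; exists h => //= x.
exact: le_trans (hf x) (f12 x).
Qed.

Lemma le_integral_nm (F L : T -> \bar R) :
  (forall x, L x <= F x) -> \int[mu]_x L x <= \int[mu]_x F x.
Proof.
move=> LF.
rewrite (integralE _ _ L) (integralE _ _ F).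
apply: leeB.
  apply: ge0_le_integral_nm => x; first exact: funepos_ge0.
  by rewrite !funeposE le_max2.
apply: ge0_le_integral_nm => x; first exact: funeneg_ge0.
by rewrite !funenegE le_max2 // leeN2.
Qed.
End S3.

Theorem mainTheorem7 (d : measure_display) (T : measurableType d) (R : realType)
  (P Q : probability T R) (gamma : R) (f : R -> R) :
  P `<< Q ->
  1 < gamma ->
  convex_function (`]0, +oo[%classic : set R) f ->
  f 1 = 0 ->
  derivable f 1 1 ->
  derivable f gamma 1 ->
  derive1 f 1 < derive1 f gamma ->
  forall E, measurable E ->
  (P E <= gamma%:E * Q E
          + f_divergence f P Q * ((derive1 f gamma - derive1 f 1)^-1)%:E)%E.
Proof.
move=> PQ g1 cf f1 d1 dg ab E mE.
set a := derive1 f 1; set b := derive1 f gamma.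
have c0 : 0 < b - a by rewrite subr_gt0.
have gam0 : 0 < gamma by apply: lt_trans g1.
have PQ' : (charge_of_finite_measure P `<< Q) := PQ.
set g := Radon_Nikodym (charge_of_finite_measure P) Q.
have gfin x : g x \is a fin_num := Radon_Nikodym_fin_num x PQ'.
have gint : Q.-integrable setT g := Radon_Nikodym_integrable PQ'.
have mg := @measurable_int _ _ _ _ _ _ gint.
have gP A : measurable A -> P A = (\int[Q]_(x in A) g x)%E.
  by move=> mA; exact: (Radon_Nikodym_integral PQ' mA).
pose G := (g^\+)%E.
have Gint : Q.-integrable setT G := integrable_funepos measurableT gint.
have gnint : Q.-integrable setT (g^\-)%E := integrable_funeneg measurableT gint.
have GA A : measurable A ->
    (\int[Q]_(x in A) G x = P A + \int[Q]_(x in A) (g^\-)%E x)%E.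
  move=> mA; rewrite gP // (integralE _ _ g) subeK //.
  apply: integrable_fin_num => //.
  by apply: (integrableS measurableT) => //.


have gneg0 : (\int[Q]_x (g^\-)%E x = 0)%E.
  pose N := setT `&` [set x | (g x < 0)%E].
  have mN : measurable N by exact: emeasurable_fun_infty_o.
  have -> : (\int[Q]_x (g^\-)%E x = \int[Q]_(x in N) (g^\-)%E x)%E.
    rewrite (integral_mkcond N); apply: eq_integral => x _.
    rewrite /patch; case: ifPn => // /negP xN.
    rewrite funenegE; apply/max_idPr.
    rewrite leeNl oppe0 leNgt; apply/negP => gx; apply: xN.
    by rewrite inE.
  have Np : (\int[Q]_(x in N) G x = 0)%E.
    apply: integral0_eq => x [_ /= gx].
    by rewrite /G funeposE; apply/max_idPr/ltW.
  have := GA N mN; rewrite Np => /esym H.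
  apply/eqP; rewrite eq_le; apply/andP; split; last first.
    by apply: integral_ge0 => x _; exact: funeneg_ge0.
  have HP : (0 <= P N)%E by [].
  move: H HP; set u := (\int[Q]_(x in N) _)%E => H HP.
  by rewrite -H leeDr.
have IG1 : (\int[Q]_x G x = 1)%E by rewrite GA // gneg0 adde0 probability_setT.
have IGE : (P E <= \int[Q]_(x in E) G x)%E.
  by rewrite GA // leeDl // integral_ge0 // => x _; exact: funeneg_ge0.
have sA t : 0 < t -> a * (t - 1) <= f t.
  by move=> t0; have := @supp_line R f cf 1 t ltr01 t0 d1; rewrite f1 add0r.
have sB t : 0 < t -> a * (t - 1) + (b - a) * (t - gamma) <= f t.
  move=> t0; have := @supp_line R f cf gamma t gam0 t0 dg.
  have := sA gamma gam0; rewrite -/b; lra.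
have fa0 := @f_at0_ge R f cf f1 d1; rewrite -/a in fa0.
pose L x := (a%:E * (G x - 1) +
  ((fun y => (b - a)%:E * (G y - gamma%:E)) \_ E) x)%E.
have LF x : (L x <= f_ext f (g x))%E.
  have gx := fineK (gfin x); set r := fine (g x) in gx.
  have pt : (point : \bar R) = 0%E := erefl.
  rewrite /L /patch /= /G !funeposE /f_ext -gx pt.
  have [r0|r0] := ltP 0 r.
    rewrite lte_fin r0 /=.
    have -> : Order.max r%:E 0%E = r%:E by apply/max_idPl; rewrite lee_fin ltW.
    case: ifP => _.
      by rewrite -?EFinD -?EFinM -?EFinD lee_fin sB.
    by rewrite adde0 -?EFinD -?EFinM -?EFinD lee_fin sA.
  rewrite ltNge lee_fin r0 /=.
  have -> : Order.max r%:E 0%E = 0%E by apply/max_idPr; rewrite lee_fin.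
  apply: le_trans fa0.
  case: ifP => _.
    rewrite !add0e -?EFinD -?EFinM -?EFinD lee_fin; nra.
  rewrite adde0 add0e -?EFinD -?EFinM -?EFinD lee_fin; lra.
have Lint1 : Q.-integrable setT (fun x => a%:E * (G x - 1))%E.
  apply: integrableZl => //; apply: integrableB => //.
  exact: finite_measure_integrable_cst.
have Lint2 : Q.-integrable setT
    ((fun y => (b - a)%:E * (G y - gamma%:E))%E \_ E).
  rewrite -integrable_mkcond //.
  apply: integrableZl => //; apply: integrableB => //.
    by apply: (integrableS measurableT) => //.
  exact: finite_measure_integrable_cst.
have IL1 : (\int[Q]_x (a%:E * (G x - 1)) = 0)%E.
  rewrite integralZl //; last by apply: integrableB => //; exact: finite_measure_integrable_cst.
  rewrite integralB //; last exact: finite_measure_integrable_cst.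
  rewrite IG1 integral_cst // [X in (1 * X)%E](_ : _ = 1%E); last exact: probability_setT.
  by rewrite mule1 subee // mule0.
have GEint : Q.-integrable E G by apply: (integrableS measurableT) => //.
have IL2 : (\int[Q]_x (((fun y => (b - a)%:E * (G y - gamma%:E)) \_ E) x) =
    (b - a)%:E * (\int[Q]_(x in E) G x - gamma%:E * Q E))%E.
  rewrite -integral_mkcond integralZl //; last first.
    by apply: integrableB => //; exact: finite_measure_integrable_cst.
  rewrite integralB //; last exact: finite_measure_integrable_cst.
  by rewrite integral_cst.
have IL : (\int[Q]_x L x =
    (b - a)%:E * (\int[Q]_(x in E) G x - gamma%:E * Q E))%E.
  by rewrite /L integralD // IL1 IL2 add0e.
have DL := @le_integral_nm _ _ _ Q _ _ LF.
rewrite IL in DL.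
have IEfin : (\int[Q]_(x in E) G x)%E \is a fin_num by exact: integrable_fin_num.
have pfin : P E \is a fin_num by exact: fin_num_measure.
have qfin : Q E \is a fin_num by exact: fin_num_measure.
rewrite /f_divergence -/g.
move: DL IGE.
set I := (\int[Q]_(x in E) G x)%E.
set D := (\int[Q]_x _)%E.
rewrite -[P E]fineK // -[Q E]fineK // -[I]fineK //.
set p := fine (P E); set q := fine (Q E); set i := fine I.
case: D => [dd| |] HD Hp.
- rewrite -?EFinB -?EFinM -?EFinD -?EFinB -?EFinM lee_fin in HD.
  rewrite lee_fin in Hp.
  rewrite -?EFinM -?EFinD lee_fin.
  have : i - gamma * q <= dd / (b - a) by rewrite ler_pdivlMr // mulrC.
  lra.
- rewrite gt0_mulye ?lte_fin ?invr_gt0 // -EFinM addey //.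
  exact: leey.
- move: HD; rewrite leeNy_eq -?EFinB -?EFinM -?EFinD -?EFinB -?EFinM.
  by [].
Qed.
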